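(* Let $\epsilon\in(0,1]$, $\gamma>0$, $N\ge2$. For $x\in V$ let $\vec p_x=(\hat p((x,0),(L,0)),\hat p((x,0),(L,1)),\hat p((x,0),(R,0)),\hat p((x,0),(R,1)))^T$ and $\vec q_x=(\hat p((x,1),(L,0)),\hat p((x,1),(L,1)),\hat p((x,1),(R,0)),\hat p((x,1),(R,1)))^T$. Then the matrix $M_\epsilon$ is invertible and, for all $x\in V$, $$\vec p_x=\vec c_1x+\vec c_2+\epsilon(\vec c_3\alpha_1^x+\vec c_4\alpha_2^x),\qquad \vec q_x=\vec c_1x+\vec c_2-(\vec c_3\alpha_1^x+\vec c_4\alpha_2^x).$$
   Context: $V=\{1,\dots,N\}$. Absorption probabilities: consider the continuous-time Markov chain on $(V\times\{0,1\})\cup\{(L,0),(L,1),(R,0),(R,1)\}$ in which the last four states are absorbing, and from $(x,0)$ it jumps to $(x\pm1,0)$ at rate $1$ each (whenever $x\pm1\in V$), from $(x,1)$ to $(x\pm1,1)$ at rate $\epsilon$ each (whenever $x\pm1\in V$), from $(x,i)$ to $(x,1-i)$ at rate $\gamma$, from $(1,i)$ to $(L,i)$ at rate $1$, and from $(N,i)$ to $(R,i)$ at rate $1$. $\hat p((x,i),(\beta,j))$ denotes the probability that this chain started at $(x,i)$ is eventually absorbed at $(\beta,j)$. Let $\alpha_1<\alpha_2$ be the two roots of $\epsilon\alpha^2-(\gamma(1+\epsilon)+2\epsilon)\alpha+\epsilon=0$, i.e. $\alpha_{1,2}=1+\frac\gamma2(1+\frac1\epsilon)\mp\sqrt{[1+\frac\gamma2(1+\frac1\epsilon)]^2-1}$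 (so $\alpha_1\alpha_2=1$). Let $$M_\epsilon=\begin{pmatrix}0&1&\epsilon&\epsilon\\ 1-\epsilon&1&(\epsilon-1)\alpha_1-\epsilon&(\epsilon-1)\alpha_2-\epsilon\\ N+1&1&\epsilon\alpha_1^{N+1}&\epsilon\alpha_2^{N+1}\\ N+\epsilon&1&-\alpha_1^N(\epsilon\alpha_1+1-\epsilon)&-\alpha_2^N(\epsilon\alpha_2+1-\epsilon)\end{pmatrix},$$ and for $k\in\{1,2,3,4\}$ let $\vec c_k=(M_\epsilon^{-1})^T\vec e_k\in\mathbb R^4$ (the transpose of the $k$-th row of $M_\epsilon^{-1}$), $\vec e_k$ the standard basis vectors. *)

(* Defs.v *)
From HB Require Import structures.
From mathcomp Require Import all_boot all_order all_algebra.
From mathcomp Require Import all_classical all_reals all_analysis.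
Set Implicit Arguments. Unset Strict Implicit. Unset Printing Implicit Defensive.
Import Order.TTheory GRing.Theory Num.Theory numFieldNormedType.Exports.
Local Open Scope ring_scope.

(* State space of the chain.
   inl (i, b) : transient state (x, b) with x = i + 1 in V = {1..N}, level b
                (false = 0, true = 1).
   inr (side, b) : absorbing state (L, b) if side = false, (R, b) if side = true. *)
Definition state (N : nat) : finType := ('I_N * bool + bool * bool)%type.

Definition Lst (N : nat) (b : bool) : state N := inr (false, b).
Definition Rst (N : nat) (b : bool) : state N := inr (true, b).
Definition Vst (N : nat) (i : 'I_N) (b : bool) : state N := inl (i, b).

Section Chain.
Variables (R : realType) (N : nat) (eps gamma : R).

Definition rate (s t : state N) : R :=
  match s, t with
  | inl (i, b), inl (j, c) =>
      if b == c then
        (if ((j : nat) == i.+1) || ((i : nat) == j.+1)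
         then (if b then eps else 1) else 0)
      else (if (i : nat) == j then gamma else 0)
  | inl (i, b), inr (side, c) =>
      if b == c then
        (if side then (if (i : nat) == N.-1 then 1 else 0)
         else (if (i : nat) == 0%N then 1 else 0))
      else 0
  | inr _, _ => 0
  end.

Definition absorbing (s : state N) : bool := if s is inr _ then true else false.

Definition jump (s t : state N) : R :=
  if absorbing s then (s == t)%:R
  else rate s t / \sum_(u : state N) rate s u.

Fixpoint stepn (n : nat) (s t : state N) : R :=
  match n with
  | 0 => (s == t)%:R
  | n'.+1 => \sum_(u : state N) jump s u * stepn n' u t
  end.

(* absorption probability: for an absorbing target a, the probability of
   having been absorbed at a by step n increases to the probability of
   eventual absorption at a. *)
Definition phat (s a : state N) : R := limn (fun n => stepn n s a).

End Chain.

Section Mat.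
Variables (R : realType) (N : nat) (eps gamma : R).

Definition alpha_b : R := 1 + gamma / 2 * (1 + eps^-1).
Definition alpha1 : R := alpha_b - Num.sqrt (alpha_b ^+ 2 - 1).
Definition alpha2 : R := alpha_b + Num.sqrt (alpha_b ^+ 2 - 1).

Definition Mrows : seq (seq R) :=
  [:: [:: 0; 1; eps; eps];
      [:: 1 - eps; 1; (eps - 1) * alpha1 - eps; (eps - 1) * alpha2 - eps];
      [:: N.+1%:R; 1; eps * alpha1 ^+ N.+1; eps * alpha2 ^+ N.+1];
      [:: N%:R + eps; 1; - (alpha1 ^+ N * (eps * alpha1 + 1 - eps));
                         - (alpha2 ^+ N * (eps * alpha2 + 1 - eps))]].

Definition Meps : 'M[R]_4 := \matrix_(i < 4, j < 4) nth 0 (nth [::] Mrows i) j.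

(* c_k = (M^-1)^T e_k, k = 1..4 (here k : 'I_4 is 0-based) : its j-th entry
   is (M^-1) k j. *)
Definition cvec (k : 'I_4) : 'cV[R]_4 := (invmx Meps)^T *m delta_mx k 0.

End Mat.

Definition target (N : nat) (j : 'I_4) : state N :=
  match nat_of_ord j with
  | 0 => Lst N false
  | 1 => Lst N true
  | 2 => Rst N false
  | _ => Rst N true
  end.

(* Main.v *)
Require Import Defs.
From HB Require Import structures.
From mathcomp Require Import all_boot all_order all_algebra.
From mathcomp Require Import all_classical all_reals all_analysis.
From mathcomp Require Import ring lra.
Import Order.TTheory GRing.Theory Num.Theory numFieldNormedType.Exports.
Local Open Scope ring_scope.
Set Implicit Arguments. Unset Strict Implicit. Unset Printing Implicit Defensive.
Lemma sum_delta (R : realType) (N : nat) (s : state N) (h : state N -> R) :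
  \sum_u (s == u)%:R * h u = h s.
Proof.
rewrite (bigD1 s) //= eqxx mul1r big1 ?addr0 // => u hu.
by rewrite eq_sym (negbTE hu) mul0r.
Qed.

Definition Wf (R : realType) (N : nat) (eps gamma : R) (n : nat) (s : state N)
  (h : state N -> R) : R := \sum_u stepn eps gamma n s u * h u.

Lemma W0 (R : realType) (N : nat) (eps gamma : R) s (h : state N -> R) :
  Wf eps gamma 0 s h = h s.
Proof. exact: sum_delta. Qed.

Lemma WS (R : realType) (N : nat) (eps gamma : R) n s (h : state N -> R) :
  Wf eps gamma n.+1 s h = \sum_u jump eps gamma s u * Wf eps gamma n u h.
Proof.
rewrite /Wf /=; under eq_bigr do rewrite mulr_suml.
rewrite exchange_big; apply: eq_bigr => u _; rewrite mulr_sumr.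
by apply: eq_bigr => t _; rewrite mulrA.
Qed.

Lemma stepn_ge0 (R : realType) (N : nat) (eps gamma : R) :
  (forall s u : state N, 0 <= jump eps gamma s u) ->
  forall n (s u : state N), 0 <= stepn eps gamma n s u.
Proof.
move=> Hj; elim=> [|n IH] s u /=; first exact: ler0n.
by apply: sumr_ge0 => v _; apply: mulr_ge0.
Qed.

Lemma W_harm (R : realType) (N : nat) (eps gamma : R) (f : state N -> R) :
  (forall s, \sum_u jump eps gamma s u * f u = f s) ->
  forall n s, Wf eps gamma n s f = f s.
Proof.
move=> Hf; elim=> [|n IH] s; first exact: W0.
rewrite WS -[RHS]Hf; apply: eq_bigr => u _; by rewrite IH.
Qed.

Definition trf (R : realType) (N : nat) (u : state N) : R := (~~ absorbing u)%:R.

Definition Tf (R : realType) (N : nat) (eps gamma : R) n (s : state N) : R :=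
  Wf eps gamma n s (@trf R N).

Lemma jump_abs (R : realType) (N : nat) (eps gamma : R) (s u : state N) :
  absorbing s -> jump eps gamma s u = (s == u)%:R.
Proof. by rewrite /jump => ->. Qed.

Lemma T_ge0 (R : realType) (N : nat) (eps gamma : R) :
  (forall s u : state N, 0 <= jump eps gamma s u) ->
  forall n (s : state N), 0 <= Tf eps gamma n s.
Proof.
move=> Hj n s; apply: sumr_ge0 => u _; apply: mulr_ge0; first exact: stepn_ge0.
exact: ler0n.
Qed.

Lemma Tmono (R : realType) (N : nat) (eps gamma : R) :
  (forall s u : state N, 0 <= jump eps gamma s u) ->
  (forall s : state N, \sum_u jump eps gamma s u = 1) ->
  forall n (s : state N), Tf eps gamma n.+1 s <= Tf eps gamma n s.
Proof.
move=> Hj0 Hj1; elim=> [|n IH] s.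
  rewrite /Tf WS W0.
  case Has: (absorbing s).
    under eq_bigr do rewrite jump_abs // W0.
    by rewrite sum_delta.
  rewrite /trf Has /=.
  rewrite -[X in _ <= X](Hj1 s); apply: ler_sum => u _; rewrite W0.
  by rewrite /trf; apply: ler_piMr => //; rewrite lern1 leq_b1.
rewrite /Tf !WS; apply: ler_sum => u _.
by apply: ler_wpM2l => //; apply: IH.
Qed.

Lemma Tanti (R : realType) (N : nat) (eps gamma : R) :
  (forall s u : state N, 0 <= jump eps gamma s u) ->
  (forall s : state N, \sum_u jump eps gamma s u = 1) ->
  forall k n (s : state N), (k <= n)%N -> Tf eps gamma n s <= Tf eps gamma k s.
Proof.
move=> Hj0 Hj1 k n s; elim: n => [|n IH].
  by rewrite leqn0 => /eqP->.
rewrite leq_eqVlt => /orP[/eqP->//|]; rewrite ltnS => hk.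
exact: le_trans (Tmono Hj0 Hj1 n s) (IH hk).
Qed.

Lemma Lyap (R : realType) (N : nat) (eps gamma : R) (g : state N -> R) (c : R) :
  (forall s u : state N, 0 <= jump eps gamma s u) ->
  (forall s, ~~ absorbing s -> \sum_u jump eps gamma s u * g u <= g s - c) ->
  forall n (s : state N), Wf eps gamma n s g + c * \sum_(0 <= k < n) Tf eps gamma k s <= g s.
Proof.
move=> Hj Hg; elim=> [|n IH] s.
  by rewrite W0 big_geq // mulr0 addr0.
rewrite big_nat_recl // WS.
under [\sum_(0 <= i < n) _]eq_bigr do rewrite /Tf WS.
rewrite exchange_big /=.
have -> : forall A B C : R, A + c * (B + C) = (A + c * C) + c * B.
  by move=> A B C; ring.
apply: (@le_trans _ _ (\sum_u jump eps gamma s u * g u + c * Tf eps gamma 0 s)).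
  rewrite lerD2r mulr_sumr -big_split /=; apply: ler_sum => u _.
  rewrite -mulr_sumr mulrCA -mulrDr; apply: ler_wpM2l => //.
rewrite /Tf W0 /trf; case Has: (absorbing s) => /=.
  under eq_bigr do rewrite jump_abs //.
  by rewrite sum_delta mulr0 addr0.
by rewrite mulr1 -lerBrDr; apply: Hg; rewrite Has.
Qed.

Lemma Tbound (R : realType) (N : nat) (eps gamma : R) (g : state N -> R) (c : R) :
  (forall s u : state N, 0 <= jump eps gamma s u) ->
  (forall s : state N, \sum_u jump eps gamma s u = 1) ->
  (forall u, 0 <= g u) -> 0 < c ->
  (forall s, ~~ absorbing s -> \sum_u jump eps gamma s u * g u <= g s - c) ->
  forall n (s : state N), Tf eps gamma n s <= g s / c * n.+1%:R^-1.
Proof.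
move=> Hj0 Hj1 Hg0 Hc Hg n s.
have L := Lyap Hj0 Hg n.+1 s.
have HW : 0 <= Wf eps gamma n.+1 s g.
  by apply: sumr_ge0 => u _; apply: mulr_ge0 => //; apply: stepn_ge0.
have HS : Tf eps gamma n s *+ n.+1 <= \sum_(0 <= k < n.+1) Tf eps gamma k s.
  rewrite -[n.+1 in X in X <= _]subn0 -sumr_const_nat; apply: ler_sum_nat => k /andP[_ hk].
  by apply: Tanti => //; rewrite -ltnS.
rewrite -mulrA -invfM ler_pdivlMr; last by rewrite mulr_gt0 // ltr0n.
rewrite mulrA mulr_natr [_ * c]mulrC.
apply: le_trans L.
apply: (@le_trans _ _ (c * \sum_(0 <= k < n.+1) Tf eps gamma k s)).
  by rewrite -mulrnAr; apply: ler_wpM2l => //; apply: ltW.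
by rewrite -[X in X <= _]add0r; apply: lerD.
Qed.

Lemma abs_conv (R : realType) (N : nat) (eps gamma : R) (g : state N -> R) (c : R)
  (f : state N -> R) (s : state N) :
  (forall s u : state N, 0 <= jump eps gamma s u) ->
  (forall s : state N, \sum_u jump eps gamma s u = 1) ->
  (forall u, 0 <= g u) -> 0 < c ->
  (forall s, ~~ absorbing s -> \sum_u jump eps gamma s u * g u <= g s - c) ->
  (forall s, \sum_u jump eps gamma s u * f u = f s) ->
  (\sum_(u | absorbing u) stepn eps gamma n s u * f u @[n --> \oo] --> f s)%classic.
Proof.
move=> Hj0 Hj1 Hg0 Hc Hg Hf.
set K := \sum_v `|f v|.
set C := K * (g s / c).
have HK u : `|f u| <= K.
  by rewrite /K (bigD1 u) //= lerDl; apply: sumr_ge0 => v _.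
have HK0 : 0 <= K by apply: le_trans (HK s).
have Hd n : `|f s - \sum_(u | absorbing u) stepn eps gamma n s u * f u|
     <= C * harmonic n.
  rewrite -{1}(W_harm Hf n s) /Wf (bigID (@absorbing N)) /=.
  have -> : forall a b : R, a + b - a = b by move=> a b; ring.
  apply: le_trans (ler_norm_sum _ _ _) _.
  apply: (@le_trans _ _ (K * Tf eps gamma n s)).
    rewrite /Tf /Wf mulr_sumr [X in _ <= X](bigID (@absorbing N)) /=.
    rewrite [\sum_(i | absorbing i) _]big1 ?add0r; last by move=> u hu; rewrite /trf hu mulr0n !mulr0.
    apply: ler_sum => u hu; rewrite /trf hu mulr1n mulr1 normrM.
    rewrite ger0_norm; last exact: (stepn_ge0 Hj0).
    rewrite [K * _]mulrC.
    by apply: ler_wpM2l => //; apply: (stepn_ge0 Hj0).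
  rewrite /C -mulrA; apply: ler_wpM2l => //.
  exact: Tbound.
apply: (@squeeze_cvgr _ _ _ _ (fun n => f s - C * harmonic n)
                              (fun n => f s + C * harmonic n)).
- apply: nearW => n; have := Hd n; rewrite ler_norml => /andP[h1 h2].
  by apply/andP; split; lra.
- have H : (f s - C * harmonic n @[n --> \oo] --> f s - C * 0)%classic.
    apply: cvgB; first exact: cvg_cst.
    by apply: cvgM; [exact: cvg_cst | exact: cvg_harmonic].
  by rewrite mulr0 subr0 in H.
- have H : (f s + C * harmonic n @[n --> \oo] --> f s + C * 0)%classic.
    apply: cvgD; first exact: cvg_cst.
    by apply: cvgM; [exact: cvg_cst | exact: cvg_harmonic].
  by rewrite mulr0 addr0 in H.
Qed.

Definition rb (R : realType) (eps : R) (b : bool) : R := if b then eps else 1.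

Definition hF (R : realType) (N : nat) (F : bool -> nat -> R) (BL BR : bool -> R)
  (u : state N) : R :=
  match u with
  | inl (i, b) => F b i.+1
  | inr (false, b) => BL b
  | inr (true, b) => BR b
  end.

Lemma sum_if_eq (R : realType) (N k : nat) (G : nat -> R) :
  \sum_(j < N) (if (j : nat) == k then G j else 0) = if (k < N)%N then G k else 0.
Proof.
elim: N => [|N IH]; first by rewrite big_ord0.
rewrite big_ord_recr /= IH.
case: (ltngtP k N) => [hk|hk|->].
- by rewrite addr0 ltnS ltnW.
- by rewrite addr0 ltnS leqNgt hk.
- by rewrite add0r ltnSn.
Qed.

Lemma sum_if_eqS (R : realType) (N k : nat) (G : nat -> R) : (k < N)%N ->
  \sum_(j < N) (if k == (j : nat).+1 then G j else 0) = if (0 < k)%N then G k.-1 else 0.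
Proof.
case: k => [|k] hk.
  by rewrite big1.
under eq_bigr do rewrite eqSS eq_sym.
by rewrite sum_if_eq /= (ltn_trans _ hk).
Qed.

Lemma pair_sum (R : realType) (I J : finType) (G : I * J -> R) :
  \sum_(p : I * J) G p = \sum_(i : I) \sum_(j : J) G (i, j).
Proof. by rewrite pair_big; apply: eq_bigr => -[i j]. Qed.

From mathcomp Require Import zify.

Lemma rate_inner (R : realType) (N : nat) (eps gamma : R) (F : bool -> nat -> R)
  (i j : 'I_N) (b : bool) :
  \sum_(c : bool) rate eps gamma (inl (i, b)) (inl (j, c)) * F c (j : nat).+1 =
  (if (j : nat) == i.+1 then rb eps b * F b j.+1 else 0)
  + (if (i : nat) == j.+1 then rb eps b * F b j.+1 else 0)
  + (if (j : nat) == i then gamma * F (~~ b) j.+1 else 0).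
Proof.
rewrite big_bool; case: b => /=;
repeat (case: ifP => /=; move=> ?); rewrite ?mul0r ?add0r ?addr0 //; try lia.
Qed.

Lemma rate_innerR (R : realType) (N : nat) (eps gamma : R) (F : bool -> nat -> R)
  (BL BR : bool -> R) (i : 'I_N) (b : bool) :
  \sum_(p : bool * bool) rate eps gamma (inl (i, b)) (inr p) * @hF R N F BL BR (inr p) =
  (if (i : nat) == 0%N then BL b else 0) + (if (i : nat) == N.-1 then BR b else 0).
Proof.
rewrite pair_sum !big_bool /=; case: b => /=;
repeat (case: ifP => /=; move=> ?); rewrite ?mul0r ?add0r ?addr0 ?mul1r //; try lia; by rewrite addrC.
Qed.

Lemma rate_expand (R : realType) (N : nat) (eps gamma : R) (F : bool -> nat -> R)
  (BL BR : bool -> R) (i : 'I_N) (b : bool) :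
  \sum_u rate eps gamma (inl (i, b)) u * @hF R N F BL BR u =
  (if (0 < i)%N then rb eps b * F b i else BL b)
  + (if (i.+1 < N)%N then rb eps b * F b i.+2 else BR b)
  + gamma * F (~~ b) i.+1.
Proof.
rewrite big_sumType rate_innerR pair_sum.
under eq_bigr do rewrite rate_inner.
rewrite !big_split /=.
rewrite (sum_if_eq _ _ (fun j => rb eps b * F b j.+1)).
rewrite (sum_if_eqS (fun j => rb eps b * F b j.+1) (ltn_ord i)).
rewrite (sum_if_eq _ _ (fun j => gamma * F (~~ b) j.+1)) ltn_ord.
have hi := ltn_ord i.
repeat (case: ifP => /=; move=> ?); rewrite ?mul0r ?add0r ?addr0 ?mul1r //; try lia.
all: rewrite ?prednK //; ring.
Qed.

Definition one3 (R : realType) (N : nat) : state N -> R :=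
  @hF R N (fun _ _ => 1) (fun _ => 1) (fun _ => 1).

Lemma one3E (R : realType) (N : nat) (u : state N) : one3 R u = 1.
Proof. by case: u => [[i b]|[[] b]]. Qed.

Lemma rate_sum (R : realType) (N : nat) (eps gamma : R) (i : 'I_N) (b : bool) :
  \sum_u rate eps gamma (inl (i, b)) u =
  (if (0 < i)%N then rb eps b else 1) + (if (i.+1 < N)%N then rb eps b else 1) + gamma.
Proof.
have := rate_expand eps gamma (fun _ _ => 1) (fun _ => 1) (fun _ => 1) i b.
rewrite !mulr1 => <-; apply: eq_bigr => u _.
by case: u => [[? ?]|[[] ?]]; rewrite mulr1.
Qed.

Lemma rb_gt0 (R : realType) (eps : R) b : 0 < eps -> 0 < rb eps b.
Proof. by case: b => //= _; exact: ltr01. Qed.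

Lemma rb_le1 (R : realType) (eps : R) b : eps <= 1 -> rb eps b <= 1.
Proof. by case: b. Qed.

Lemma Z_gt0 (R : realType) (N : nat) (eps gamma : R) (i : 'I_N) (b : bool) :
  0 < eps -> 0 < gamma -> 0 < \sum_u rate eps gamma (inl (i, b)) u.
Proof.
move=> he hg; rewrite rate_sum.
have h1 := rb_gt0 b he.
by apply: ltr_wpDl => //; apply: addr_ge0; case: ifP => _; rewrite ?ler01 ?ltW.
Qed.

Lemma rate_ge0 (R : realType) (N : nat) (eps gamma : R) (s t : state N) :
  0 <= eps -> 0 <= gamma -> 0 <= rate eps gamma s t.
Proof.
move=> he hg; case: s => [[i b]|[side b]] //.
case: t => [[j c]|[side c]] /=; repeat case: ifP => _; rewrite ?ler01 //.
Qed.

Lemma jump_inl (R : realType) (N : nat) (eps gamma : R) (i : 'I_N) b (u : state N) :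
  jump eps gamma (inl (i, b)) u =
  rate eps gamma (inl (i, b)) u / \sum_v rate eps gamma (inl (i, b)) v.
Proof. by []. Qed.

Lemma jump_ge0 (R : realType) (N : nat) (eps gamma : R) (s u : state N) :
  0 < eps -> 0 < gamma -> 0 <= jump eps gamma s u.
Proof.
move=> he hg; case: s => [[i b]|p]; last by rewrite jump_abs //; exact: ler0n.
rewrite jump_inl; apply: divr_ge0; first by apply: rate_ge0; apply: ltW.
by apply: ltW; apply: Z_gt0.
Qed.

Lemma jump_sum1 (R : realType) (N : nat) (eps gamma : R) (s : state N) :
  0 < eps -> 0 < gamma -> \sum_u jump eps gamma s u = 1.
Proof.
move=> he hg; case: s => [[i b]|p].
  under eq_bigr do rewrite jump_inl.
  rewrite -mulr_suml divff //.
  by rewrite gt_eqF //; apply: Z_gt0.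
under eq_bigr do rewrite jump_abs //.
by rewrite -[RHS](@sum_delta R N (inr p) (fun _ => (1 : R))); apply: eq_bigr => u _; rewrite mulr1.
Qed.

Lemma jump_sum (R : realType) (N : nat) (eps gamma : R) (i : 'I_N) b (h : state N -> R) :
  \sum_u jump eps gamma (inl (i, b)) u * h u =
  (\sum_u rate eps gamma (inl (i, b)) u * h u) / \sum_u rate eps gamma (inl (i, b)) u.
Proof.
rewrite mulr_suml; apply: eq_bigr => u _; by rewrite jump_inl mulrAC.
Qed.

Definition BLof (R : realType) (eps : R) (F : bool -> nat -> R) (b : bool) : R :=
  rb eps b * F b 0%N + (1 - rb eps b) * F b 1%N.
Definition BRof (R : realType) (N : nat) (eps : R) (F : bool -> nat -> R) (b : bool) : R :=
  rb eps b * F b N.+1 + (1 - rb eps b) * F b N.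

Lemma harm_gen (R : realType) (N : nat) (eps gamma : R) (F : bool -> nat -> R) :
  (2 <= N)%N -> 0 < eps -> 0 < gamma ->
  (forall b y, gamma * F (~~ b) y.+1 =
     (2 * rb eps b + gamma) * F b y.+1 - rb eps b * (F b y + F b y.+2)) ->
  forall s : state N, \sum_u jump eps gamma s u * hF F (BLof eps F) (BRof N eps F) u
                      = hF F (BLof eps F) (BRof N eps F) s.
Proof.
move=> hN he hg hI [[i b]|p]; last first.
  by under eq_bigr do rewrite jump_abs //; rewrite sum_delta.
rewrite jump_sum rate_expand.
have hZ := Z_gt0 i b he hg.
rewrite -[RHS](mulfK (lt0r_neq0 hZ)); congr (_ / _).
rewrite rate_sum hI /= /BLof /BRof.
have hi := ltn_ord i.
have [h0|h0] := boolP (0 < i)%N; have [h1|h1] := boolP (i.+1 < N)%N.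
- ring.
- have e1 : (i.+1 = N)%N by lia.
  have E1 : F b N = F b i.+1 by rewrite e1.
  have E2 : F b N.+1 = F b i.+2 by rewrite e1.
  by rewrite E1 E2; ring.
- have e0 : (i : nat) = 0%N by lia.
  by rewrite e0; ring.
- lia.
Qed.

Definition Gly (R : realType) (N : nat) (x : nat) : R := x%:R * (N.+1%:R - x%:R).

Definition gly (R : realType) (N : nat) : state N -> R :=
  @hF R N (fun _ x => Gly R N x) (fun _ => 0) (fun _ => 0).

Lemma gly_ge0 (R : realType) (N : nat) (u : state N) : 0 <= gly R u.
Proof.
case: u => [[i b]|[[] b]] //; rewrite /gly /= /Gly.
apply: mulr_ge0 => //; rewrite subr_ge0 ler_nat ltnS ltnW //.
Qed.

Lemma Lyap_chain (R : realType) (N : nat) (eps gamma : R) :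
  (2 <= N)%N -> 0 < eps -> eps <= 1 -> 0 < gamma ->
  forall s : state N, ~~ absorbing s ->
  \sum_u jump eps gamma s u * gly R u <= gly R s - eps / (2 + gamma).
Proof.
move=> hN he he1 hg [[i b]|p] // _.
rewrite jump_sum /gly rate_expand.
have hZ := Z_gt0 i b he hg.
rewrite ler_pdivrMr // rate_sum /=.
have hrb0 := rb_gt0 b he; have hrb1 := rb_le1 b he1.
have hrbe : eps <= rb eps b by rewrite /rb; case: (b).
set Z := _ + _ + gamma.
have hZ2 : Z <= 2 + gamma.
  by rewrite /Z; case: ifP => _; case: ifP => _; lra.
have hcZ : eps / (2 + gamma) * Z <= eps.
  rewrite mulrAC ler_pdivrMr; last lra.
  by apply: ler_wpM2l; [apply: ltW|].
suff hE : (if (0 < i)%N then rb eps b * Gly R N i else 0) +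
  (if (i.+1 < N)%N then rb eps b * Gly R N i.+2 else 0) +
  gamma * Gly R N i.+1 <= Gly R N i.+1 * Z - 2 * rb eps b.
  rewrite mulrBl; apply: (le_trans hE); rewrite lerD2l lerN2.
  apply: (le_trans hcZ); lra.
rewrite /Z /Gly.
have hi := ltn_ord i.
have hrb' : 0 <= 1 - rb eps b by lra.
have [h0|h0] := boolP (0 < i)%N; have [h1|h1] := boolP (i.+1 < N)%N.
- rewrite ?mulrS ?natr1 ?natrD; lra.
- have e1 : (i.+1 = N)%N by lia.
  have E : N.+1%:R = i.+2%:R :> R by rewrite e1.
  have := mulr_ge0 hrb' (ler0n R i.+1).
  rewrite E ?mulrS ?natr1 ?natrD; lra.
- have e0 : (i : nat) = 0%N by lia.
  have := mulr_ge0 hrb' (ler0n R N).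
  rewrite e0 ?mulrS ?natr1 ?natrD; lra.
- lia.
Qed.

Lemma sum4 (R : realType) (G : 'I_4 -> R) : \sum_(k < 4) G k = G 0 + G 1 + G 2 + G 3.
Proof.
rewrite !big_ord_recl big_ord0 addr0 !addrA /=.
congr (_ + _ + _ + _); congr G; apply: val_inj => //.
Qed.

Definition rootp (R : realType) (eps gamma a : R) : R :=
  eps * a ^+ 2 - (gamma * (1 + eps) + 2 * eps) * a + eps.

Lemma alpha_facts (R : realType) (eps gamma : R) : 0 < eps -> 0 < gamma ->
  rootp eps gamma (alpha1 eps gamma) = 0 /\ rootp eps gamma (alpha2 eps gamma) = 0 /\
      alpha1 eps gamma * alpha2 eps gamma = 1 /\
      0 < alpha1 eps gamma /\ 0 < alpha2 eps gamma /\
      alpha1 eps gamma != alpha2 eps gamma.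
Proof.
move=> he hg.
set ab := alpha_b eps gamma.
have hab : 1 < ab.
  rewrite /ab /alpha_b ltrDl; apply: mulr_gt0; first by apply: divr_gt0.
  by apply: addr_gt0 => //; rewrite invr_gt0.
have hd : 0 < ab ^+ 2 - 1.
  by rewrite subr_gt0 expr_gt1 //; apply: le_trans (ltW hab); rewrite ler01.
set sq := Num.sqrt (ab ^+ 2 - 1).
have hsq : sq ^+ 2 = ab ^+ 2 - 1 by rewrite sqr_sqrtr // ltW.
have hsq0 : 0 < sq by rewrite sqrtr_gt0.
have hE : gamma * (1 + eps) + 2 * eps = eps * 2 * ab.
  rewrite /ab /alpha_b; field; exact: lt0r_neq0.
have hR a : rootp eps gamma a = eps * ((a - ab) ^+ 2 - (ab ^+ 2 - 1)).
  by rewrite /rootp hE; ring.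
have h1 : alpha1 eps gamma = ab - sq by [].
have h2 : alpha2 eps gamma = ab + sq by [].
have hp : alpha1 eps gamma * alpha2 eps gamma = 1.
  rewrite h1 h2; have -> : (ab - sq) * (ab + sq) = ab ^+ 2 - sq ^+ 2 by ring.
  by rewrite hsq; ring.
have ha2 : 0 < alpha2 eps gamma by rewrite h2; apply: addr_gt0 => //; lra.
split; [|split; [|split; [done|split; [|split; [done|]]]]].
- by rewrite hR h1 -hsq; ring.
- by rewrite hR h2 -hsq; ring.
- have : 0 < alpha1 eps gamma * alpha2 eps gamma by rewrite hp ltr01.
  by rewrite pmulr_lgt0.
- by rewrite h1 h2; apply/eqP => /eqP; rewrite -subr_eq0; lra.
Qed.

Definition Fc (R : realType) (eps gamma : R) (c0 c1 c2 c3 : R) (b : bool) (x : nat) : R :=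
  c0 * x%:R + c1 + (if b then -1 else eps) *
     (c2 * alpha1 eps gamma ^+ x + c3 * alpha2 eps gamma ^+ x).

Lemma Fc_interior (R : realType) (eps gamma : R) (c0 c1 c2 c3 : R) :
  0 < eps -> 0 < gamma ->
  forall b y, gamma * Fc eps gamma c0 c1 c2 c3 (~~ b) y.+1 =
    (2 * rb eps b + gamma) * Fc eps gamma c0 c1 c2 c3 b y.+1
    - rb eps b * (Fc eps gamma c0 c1 c2 c3 b y + Fc eps gamma c0 c1 c2 c3 b y.+2).
Proof.
move=> he hg b y.
have [r1 [r2 _]] := alpha_facts he hg.
apply/eqP; rewrite -subr_eq0; apply/eqP.
transitivity ((if b then -1 else 1) *
   (c2 * alpha1 eps gamma ^+ y * rootp eps gamma (alpha1 eps gamma) +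
    c3 * alpha2 eps gamma ^+ y * rootp eps gamma (alpha2 eps gamma))).
  by case: b; rewrite /Fc /rb /rootp /= !exprS ?mulrS; ring.
by rewrite r1 r2 !mulr0 addr0 mulr0.
Qed.

Definition candF (R : realType) (eps gamma : R) (c : 'I_4 -> R) : bool -> nat -> R :=
  Fc eps gamma (c 0) (c 1) (c 2) (c 3).

Definition candf (R : realType) (N : nat) (eps gamma : R) (c : 'I_4 -> R) : state N -> R :=
  hF (candF eps gamma c) (BLof eps (candF eps gamma c)) (BRof N eps (candF eps gamma c)).

Lemma rowsE (R : realType) (N : nat) (eps gamma : R) (c : 'I_4 -> R) (r : 'I_4) :
  \sum_k Meps N eps gamma r k * c k = candf eps gamma c (target N r).
Proof.
rewrite sum4 !mxE.
case: r => [[|[|[|[|r]]]] hr] //=;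
rewrite /candf /candF /BLof /BRof /Fc /rb /= ?expr0 ?exprS ?mulrS; ring.
Qed.

Lemma cvecE (R : realType) (N : nat) (eps gamma : R) (k j : 'I_4) :
  cvec N eps gamma k j 0 = invmx (Meps N eps gamma) k j.
Proof.
rewrite /cvec !mxE (bigD1 k) //= !mxE !eqxx mulr1 big1 ?addr0 // => l hl.
by rewrite !mxE (negbTE hl) mulr0.
Qed.

Lemma abs_target (N : nat) (u : state N) : absorbing u -> exists r, u = target N r.
Proof.
case: u => [[i b]|[side b]] // _.
by exists (if side then (if b then 3 else 2) else (if b then 1 else 0)); case: side; case: b.
Qed.

Lemma target_eq (N : nat) (r j : 'I_4) : (target N r == target N j) = (r == j).
Proof.
by case: r => [[|[|[|[|r]]]] hr]; case: j => [[|[|[|[|j]]]] hj].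
Qed.

Lemma all4 (P : 'I_4 -> Prop) : P 0 -> P 1 -> P 2 -> P 3 -> forall k, P k.
Proof.
move=> h0 h1 h2 h3 [[|[|[|[|k]]]] hk] //.
- by rewrite (_ : Ordinal hk = 0) //; apply: val_inj.
- by rewrite (_ : Ordinal hk = 1) //; apply: val_inj.
- by rewrite (_ : Ordinal hk = 2) //; apply: val_inj.
- by rewrite (_ : Ordinal hk = 3) //; apply: val_inj.
Qed.

Lemma sum_abs_delta (R : realType) (N : nat) (h : state N -> R) (t : state N) :
  absorbing t -> \sum_(u | absorbing u) h u * (u == t)%:R = h t.
Proof.
move=> ht; rewrite (bigD1 t) //= eqxx mulr1 big1 ?addr0 // => u /andP[_ hu].
by rewrite (negbTE hu) mulr0.
Qed.

Lemma lim_of_cst (R : realType) (u : nat -> R) (a l : R) :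
  (forall n, u n = a) -> (u n @[n --> \oo] --> l)%classic -> l = a.
Proof.
move=> hu h; have <- : limn u = l by exact: cvg_lim.
rewrite (_ : u = fun _ => a); first exact: lim_cst.
by apply: funext.
Qed.

Lemma cand_conv (R : realType) (N : nat) (eps gamma : R) (c : 'I_4 -> R) (s : state N) :
  (2 <= N)%N -> 0 < eps -> eps <= 1 -> 0 < gamma ->
  (\sum_(u | absorbing u) stepn eps gamma n s u * candf eps gamma c u @[n --> \oo]
     --> candf eps gamma c s)%classic.
Proof.
move=> hN he he1 hg.
apply: (@abs_conv R N eps gamma (gly R (N:=N)) (eps / (2 + gamma))).
- by move=> *; apply: jump_ge0.
- by move=> *; apply: jump_sum1.
- exact: gly_ge0.
- by apply: divr_gt0 => //; lra.
- exact: Lyap_chain.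
- by apply: harm_gen => //; apply: Fc_interior.
Qed.

Lemma M_unit (R : realType) (eps gamma : R) (N : nat) :
  (2 <= N)%N -> 0 < eps -> eps <= 1 -> 0 < gamma -> Meps N eps gamma \in unitmx.
Proof.
move=> hN he he1 hg.
rewrite unitmxE unitfE -det_tr; apply/negP => /det0P [v hv0 hv].
pose c : 'I_4 -> R := fun k => v 0 k.
have Hrow r : candf eps gamma c (target N r) = 0.
  have /matrixP/(_ 0 r) := hv; rewrite !mxE => H.
  rewrite -rowsE; apply: etrans H; apply: eq_bigr => k _.
  by rewrite [(_^T) _ _]mxE mulrC.
have Habs (u : state N) : absorbing u -> candf eps gamma c u = 0.
  by move=> /abs_target [r ->]; apply: Hrow.
have Hf (s : state N) : candf eps gamma c s = 0.
  have H := @cand_conv R N eps gamma c s hN he he1 hg.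
  apply: (lim_of_cst _ H) => n.
  by rewrite big1 // => u hu; rewrite Habs // mulr0.
have hN0 : (0 < N)%N by lia.
have A0 := Hf (inl (Ordinal hN0, false)).
have A1 := Hf (inl (Ordinal hN0, true)).
have B0 := Hf (inl (Ordinal hN, false)).
have B1 := Hf (inl (Ordinal hN, true)).
move: A0 A1 B0 B1; rewrite /candf /candF /= /Fc.
have [_ [_ [hp [ha1 [ha2 hne]]]]] := alpha_facts he hg.
set a1 := alpha1 eps gamma in hp ha1 ha2 hne *.
set a2 := alpha2 eps gamma in hp ha1 ha2 hne *.
rewrite !expr1 => A0 A1 B0 B1.
have e1 : c 2 * a1 + c 3 * a2 = 0.
  have : (1 + eps) * (c 2 * a1 + c 3 * a2) = 0 by lra.
  by move/eqP; rewrite mulf_eq0 => /orP[/eqP|/eqP//]; lra.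
have e2 : c 2 * a1 ^+ 2 + c 3 * a2 ^+ 2 = 0.
  have : (1 + eps) * (c 2 * a1 ^+ 2 + c 3 * a2 ^+ 2) = 0 by rewrite !expr2; lra.
  by move/eqP; rewrite mulf_eq0 => /orP[/eqP|/eqP//]; lra.
have c3z : c 3 = 0.
  have : c 3 * (a2 * (a1 - a2)) = 0.
    have -> : c 3 * (a2 * (a1 - a2)) =
      a1 * (c 2 * a1 + c 3 * a2) - (c 2 * a1 ^+ 2 + c 3 * a2 ^+ 2) by ring.
    by rewrite e1 e2 mulr0 subr0.
  move/eqP; rewrite mulf_eq0 => /orP[/eqP //|]; rewrite mulf_eq0 => /orP[|].
    by rewrite (gt_eqF ha2).
  by rewrite subr_eq0 (negbTE hne).
have c2z : c 2 = 0.
  move: e1; rewrite c3z mul0r addr0 => /eqP; rewrite mulf_eq0 => /orP[/eqP //|].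
  by rewrite (gt_eqF ha1).
have e1' : c 2 * a1 * a1 + c 3 * a2 * a2 = 0 by rewrite c2z c3z !mul0r addr0.
have c0z : c 0 = 0 by lra.
have c1z : c 1 = 0 by lra.
move/negP: hv0; apply; apply/eqP/rowP; apply: all4; rewrite !mxE.
- exact: c0z.
- exact: c1z.
- exact: c2z.
- exact: c3z.
Qed.

Lemma target_abs (N : nat) (j : 'I_4) : absorbing (target N j).
Proof. by case: j => [[|[|[|[|j]]]] hj]. Qed.

Unset Implicit Arguments.

Theorem mainTheorem6 (R : realType) (eps gamma : R) (N : nat)
  (heps0 : 0 < eps) (heps1 : eps <= 1) (hgamma : 0 < gamma) (hN : (2 <= N)%N) :
  Meps N eps gamma \in unitmx /\
  forall (i : 'I_N) (j : 'I_4),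
    let x := i.+1 in
    let c := fun k : 'I_4 => cvec N eps gamma k j 0 in
    let a1 := alpha1 eps gamma in
    let a2 := alpha2 eps gamma in
    phat eps gamma (Vst i false) (target N j)
      = c 0 * x%:R + c 1 + eps * (c 2 * a1 ^+ x + c 3 * a2 ^+ x) /\
    phat eps gamma (Vst i true) (target N j)
      = c 0 * x%:R + c 1 - (c 2 * a1 ^+ x + c 3 * a2 ^+ x).
Proof.
have hU := M_unit hN heps0 heps1 hgamma.
split => // i j x c a1 a2.
pose cc : 'I_4 -> R := fun k => invmx (Meps N eps gamma) k j.
have Hc k : c k = cc k by rewrite /c cvecE.
have Hrow r : candf eps gamma cc (target N r) = (r == j)%:R.
  rewrite -rowsE; have /matrixP/(_ r j) := mulmxV hU; rewrite !mxE => H.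
  exact: H.
have Habs (u : state N) : absorbing u -> candf eps gamma cc u = (u == target N j)%:R.
  by move=> /abs_target [r ->]; rewrite Hrow target_eq.
have Hp (s : state N) : phat eps gamma s (target N j) = candf eps gamma cc s.
  have H := @cand_conv R N eps gamma cc s hN heps0 heps1 hgamma.
  have E : (fun n => \sum_(u | absorbing u) stepn eps gamma n s u * candf eps gamma cc u)
         = (fun n => stepn eps gamma n s (target N j)).
    apply: funext => n.
    rewrite -[RHS](sum_abs_delta (stepn eps gamma n s) (target_abs N j)).
    by apply: eq_bigr => u hu; rewrite Habs.
  rewrite E in H; rewrite /phat; exact: cvg_lim.
rewrite /Vst !Hp /candf /candF /= /Fc !Hc /x /a1 /a2.
by split; ring.
Qed.
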